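(* Let $X\in\mathbb{R}^{n\times m}$ with $m>n$ be a full rank matrix. There exists a subset $\mathcal S\subset[m]$ of cardinality $m-1$ such that $X_{\mathcal S}$ is full rank and $$\|X_{\mathcal S}^{\dagger}\|_F^2 \le \frac{m-n+1}{m-n}\,\|X^{\dagger}\|_F^2 .$$
   Context: $[m]=\{1,\dots,m\}$; $X_{\mathcal S}$ is the submatrix of $X$ formed by the columns indexed by $\mathcal S$; $A^{\dagger}$ is the Moore–Penrose pseudo-inverse and $\|\cdot\|_F$ the Frobenius norm. *)

(* Defs.v *)
From mathcomp Require Import all_boot all_order all_algebra.
From mathcomp Require Import reals.
Set Implicit Arguments. Unset Strict Implicit. Unset Printing Implicit Defensive.
Import Order.TTheory GRing.Theory Num.Theory.
Local Open Scope ring_scope.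

(* Y is the Moore--Penrose pseudo-inverse of A (the four Penrose conditions;
   over the reals the adjoint is the transpose).  It exists and is unique. *)
Definition is_pinv (R : realType) (p q : nat) (A : 'M[R]_(p, q)) (Y : 'M[R]_(q, p)) : Prop :=
  [/\ A *m Y *m A = A, Y *m A *m Y = Y, (A *m Y)^T = A *m Y & (Y *m A)^T = Y *m A].

Definition frob2 (R : realType) (p q : nat) (A : 'M[R]_(p, q)) : R :=
  \sum_(i < p) \sum_(j < q) (A i j) ^+ 2.

(* X_S : columns of X indexed by S (in increasing order) *)
Definition colsubset (R : realType) (n m : nat) (X : 'M[R]_(n, m)) (S : {set 'I_m})
  : 'M[R]_(n, #|S|) := colsub (fun j : 'I_#|S| => enum_val j) X.

(* Main.v *)
Require Import Defs.
From mathcomp Require Import all_boot all_order all_algebra.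
From mathcomp Require Import reals ring.
Set Implicit Arguments. Unset Strict Implicit. Unset Printing Implicit Defensive.
Import Order.TTheory GRing.Theory Num.Theory.
Local Open Scope ring_scope.

Lemma frob2_tr (R : realType) p q (A : 'M[R]_(p, q)) : frob2 A = \tr (A *m A^T).
Proof.
rewrite /frob2 /mxtrace; apply: eq_bigr => i _; rewrite mxE.
by apply: eq_bigr => k _; rewrite mxE expr2.
Qed.

Lemma frob2_ge0 (R : realType) p q (A : 'M[R]_(p, q)) : 0 <= frob2 A.
Proof. by apply: sumr_ge0 => i _; apply: sumr_ge0 => k _; apply: sqr_ge0. Qed.

Lemma frob2_eq0 (R : realType) p q (A : 'M[R]_(p, q)) : frob2 A = 0 -> A = 0.
Proof.
move=> h; apply/matrixP => i k; rewrite mxE.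
have h1 := psumr_eq0P (fun i _ => sumr_ge0 _ (fun k _ => sqr_ge0 (A i k))) h.
have h2 := psumr_eq0P (fun k _ => sqr_ge0 (A i k)) (h1 i isT).
by apply/eqP; rewrite -sqrf_eq0 h2.
Qed.

Lemma pinv_uniq (R : realType) p q (M : 'M[R]_(p, q)) (Y1 Y2 : 'M[R]_(q, p)) :
  M *m Y1 = 1%:M -> M *m Y2 = 1%:M ->
  (Y1 *m M)^T = Y1 *m M -> (Y2 *m M)^T = Y2 *m M -> Y1 = Y2.
Proof.
move=> h1 h2 s1 s2.
have E : Y1 *m M = Y2 *m M.
  transitivity ((Y2 *m M) *m (Y1 *m M)).
    by rewrite -{1}s2 -s1 -trmx_mul mulmxA -(mulmxA Y1) h2 mulmx1 s1.
  by rewrite mulmxA -(mulmxA Y2) h1 mulmx1.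
by rewrite -[Y1]mulmx1 -h2 mulmxA E -mulmxA h2 mulmx1.
Qed.

Lemma rowfree_rinv (R : realType) p q (M : 'M[R]_(p, q)) (Y : 'M[R]_(q, p)) :
  row_free M -> M *m Y *m M = M -> M *m Y = 1%:M.
Proof. by move=> rf h; apply: (row_free_inj rf); rewrite h mul1mx. Qed.

Lemma pinv_exists (R : realType) p q (M : 'M[R]_(p, q)) :
  row_free M -> exists Y : 'M[R]_(q, p), M *m Y = 1%:M /\ (Y *m M)^T = Y *m M.
Proof.
move=> rf.
have U : M *m M^T \in unitmx.
  rewrite -row_free_unit -kermx_eq0; apply/eqP.
  set K := kermx _.
  have hK : K *m M *m M^T = 0 by rewrite -mulmxA mulmx_ker.
  have hKM : K *m M = 0.
    apply: frob2_eq0; rewrite frob2_tr trmx_mul mulmxA hK mul0mx.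
    by rewrite /mxtrace; apply: big1 => i _; rewrite mxE.
  by apply: (row_free_inj rf); rewrite hKM mul0mx.
exists (M^T *m invmx (M *m M^T)); split.
  by rewrite mulmxA mulmxV.
rewrite !trmx_mul trmx_inv trmx_mul !trmxK mulmxA.
done.
Qed.

Lemma mul_delta_mid (R : realType) p q r (j : 'I_q) (A : 'M[R]_(p, q)) (B : 'M[R]_(q, r)) a l :
  (A *m delta_mx j j *m B) a l = A a j * B j l.
Proof.
rewrite mxE (bigD1 j) //= big1 ?addr0.
  rewrite mxE (bigD1 j) //= big1 ?addr0; first by rewrite mxE !eqxx mulr1.
  by move=> k /negbTE kj; rewrite mxE kj mulr0.
move=> k /negbTE kj; rewrite mxE (bigD1 j) //= big1 ?addr0.
  by rewrite mxE kj andbF mulr0 mul0r.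
by move=> t /negbTE tj; rewrite mxE tj mulr0.
Qed.

Lemma tr_delta (R : realType) q (j : 'I_q) (A : 'M[R]_q) :
  \tr (A *m delta_mx j j) = A j j.
Proof.
rewrite /mxtrace (bigD1 j) //= big1 ?addr0.
  by rewrite -[A *m _]mulmx1 mul_delta_mid mxE eqxx mulr1.
move=> k /negbTE kj; rewrite -[A *m _]mulmx1 mul_delta_mid mxE.
by rewrite eq_sym kj mulr0.
Qed.

Lemma sum_setC1 (R : realType) m (j : 'I_m) (F : 'I_m -> R) :
  \sum_(i in [set~ j]) F i = \sum_i F i - F j.
Proof.
rewrite (bigD1 j isT) /= addrC addrK; apply: eq_bigl => i; by rewrite in_setC1.
Qed.

Lemma sum_enum_setC1 (R : realType) m (j : 'I_m) (F : 'I_m -> R) :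
  \sum_(k < #|[set~ j]|) F (enum_val k) = \sum_i F i - F j.
Proof. by rewrite -sum_setC1 (big_enum_val F). Qed.

Lemma avg (R : realType) m (T k : R) (b t : 'I_m -> R) :
  (0 < m)%N -> 0 < k -> \sum_i b i = T -> \sum_i (1 - t i) = k ->
  exists j, b j <= T / k * (1 - t j).
Proof.
move=> m0 k0 hb ht.
case: (boolP [exists j, b j <= T / k * (1 - t j)]) => [/existsP//|/existsPn H].
have : \sum_i T / k * (1 - t i) < \sum_i b i.
  apply: ltr_sum; first by apply/hasP; exists (Ordinal m0); rewrite ?mem_index_enum.
  by move=> i _; rewrite ltNge H.
by rewrite -mulr_sumr ht divfK ?gt_eqF // hb ltxx.
Qed.

Theorem lemma3p2 (R : realType) (n m : nat) (X : 'M[R]_(n, m)) :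
  (n < m)%N -> \rank X = minn n m ->
  exists S : {set 'I_m},
    [/\ #|S| = m.-1,
        \rank (colsubset X S) = minn n #|S| &
        forall (YS : 'M[R]_(#|S|, n)) (Y : 'M[R]_(m, n)),
          is_pinv (colsubset X S) YS -> is_pinv X Y ->
          frob2 YS <= (m - n + 1)%:R / (m - n)%:R * frob2 Y].
Proof.
move=> hnm hr.
have rf : row_free X by rewrite /row_free hr (minn_idPl (ltnW hnm)).
have [Y0 [XY0 sY0]] := pinv_exists rf.
set P := Y0 *m X.
have PP : P *m P = P by rewrite /P mulmxA -(mulmxA Y0) XY0 mulmx1.
have sP : P^T = P by [].
have Psym : forall u v, P v u = P u v.
  by move=> u v; rewrite -{1}sP mxE.
set G := Y0 *m Y0^T.
set T := frob2 Y0.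
have m0 : (0 < m)%N by apply: leq_ltn_trans hnm.
have k0 : 0 < (m - n)%:R :> R by rewrite ltr0n subn_gt0.
have [j hj] : exists j, G j j <= T / (m - n)%:R * (1 - P j j).
  apply: avg => //.
    by rewrite /T frob2_tr.
  rewrite sumrB sumr_const card_ord natrB ?(ltnW hnm) //.
  by congr (_ - _); change (\tr P = n%:R); rewrite /P mxtrace_mulC XY0 mxtrace1.
set c0 := T / (m - n)%:R.
have Gjj : forall u, G u u = \sum_l Y0 u l ^+ 2.
  by move=> u; rewrite mxE; apply: eq_bigr => l _; rewrite mxE expr2.
set s := 1 - P j j.
have s0 : 0 < s.
  rewrite ltNge; apply/negP => hs.
  have c00 : 0 <= c0 by rewrite divr_ge0 ?frob2_ge0 ?ler0n.
  have hb : G j j <= 0 by apply: (le_trans hj); rewrite mulr_ge0_le0.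
  have hb0 : G j j = 0.
    by apply/eqP; rewrite eq_le hb Gjj sumr_ge0 // => l _; apply: sqr_ge0.
  have Yj : forall l, Y0 j l = 0.
    move=> l; apply/eqP; rewrite -sqrf_eq0; apply/eqP.
    by apply: (@psumr_eq0P _ _ predT (fun l => Y0 j l ^+ 2)) => // [k _|]; [apply: sqr_ge0|rewrite -Gjj].
  move: hs; rewrite /s /P mxE big1 ?subr0 ?ler10 // => i _.
  by rewrite Yj mul0r.
set E := (delta_mx j j : 'M[R]_m).
set c := s^-1.
have cs : c * s = 1 by rewrite mulVf ?gt_eqF.
set Q := P - 1%:M.
set D := Q *m E *m Y0.
set Z0 := Y0 + c *: D.
have XP : X *m P = X by rewrite /P mulmxA XY0 mul1mx.
have XZ0 : X *m Z0 = 1%:M.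
  rewrite /Z0 mulmxDr XY0 -scalemxAr /D /Q !mulmxA mulmxBr XP mulmx1 subrr.
  by rewrite !mul0mx scaler0 addr0.
have Z0j : forall l, Z0 j l = 0.
  have hQ : Q j j = P j j - 1 by rewrite /Q !mxE eqxx.
  move=> l; rewrite /Z0 /D [LHS]mxE [W in _ + W]mxE mul_delta_mid hQ mulrA.
  have -> : c * (P j j - 1) = -1 by rewrite -opprB mulrN cs.
  by rewrite mulN1r subrr.
have Qjj : forall u, u != j -> Q u j = P u j.
  by move=> u /negbTE uj; rewrite /Q !mxE uj subr0.
have Z0X : forall u v, (Z0 *m X) u v = P u v + c * (Q u j * P j v).
  move=> u v; rewrite /Z0 mulmxDl -scalemxAl /D -!mulmxA -/P mulmxA.
  by rewrite [LHS]mxE [W in _ + W]mxE mul_delta_mid.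
have Qsym : Q^T = Q by rewrite /Q linearB /= sP trmx1.
have GQ : G *m Q = 0.
  have YP : Y0^T *m P = Y0^T.
    by rewrite -{1}sP -trmx_mul /P -mulmxA XY0 mulmx1.
  by rewrite /Q mulmxBr mulmx1 /G -mulmxA YP subrr.
have QQ : Q *m Q = 1%:M - P.
  rewrite /Q mulmxBr !mulmxBl PP mul1mx mulmx1.
  by rewrite mulmx1 subrr sub0r opprB.
have EGE : E *m G *m E = G j j *: E.
  rewrite (_ : E *m G *m E = 1%:M *m E *m (G *m E)); last by rewrite mul1mx mulmxA.
  apply/matrixP => a b; rewrite /E mul_delta_mid.
  rewrite -[G *m E]mulmx1 mul_delta_mid !mxE.
  by rewrite [j == b]eq_sym; case: (a == j); case: (b == j); rewrite /= ?mul1r ?mul0r ?mulr1 ?mulr0.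
have h1 : \tr (D *m Y0^T) = 0.
  rewrite /D -mulmxA -/G mxtrace_mulC mulmxA GQ mul0mx.
  by rewrite /mxtrace big1 // => i _; rewrite mxE.
have h2 : \tr (Y0 *m D^T) = 0 by rewrite -mxtrace_tr trmx_mul trmxK h1.
have h3 : \tr (D *m D^T) = G j j * s.
  rewrite /D !trmx_mul Qsym /E trmx_delta -/E.
  rewrite (_ : Q *m E *m Y0 *m (Y0^T *m (E *m Q)) = Q *m (E *m G *m E) *m Q); last first.
    by rewrite /G !mulmxA.
  rewrite EGE -scalemxAr -scalemxAl mxtraceZ mxtrace_mulC mulmxA QQ /E tr_delta.
  by rewrite /s !mxE eqxx.
have FZ0 : frob2 Z0 = T + c * G j j.
  rewrite frob2_tr /Z0 linearD linearZ /= mulmxDl !mulmxDr -!scalemxAl -!scalemxAr.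
  rewrite !mxtraceD !mxtraceZ h1 h2 h3 -frob2_tr -/T !mulr0 !addr0.
  by rewrite [G j j * s]mulrC [c * (s * _)]mulrA cs mul1r add0r.
exists [set~ j].
set S := [set~ j].
have cS : #|S| = m.-1 by rewrite cardsC1 card_ord.
set XS := colsubset X S.
set Zs := rowsub (fun k : 'I_#|S| => enum_val k) Z0.
have F3 : XS *m Zs = 1%:M.
  apply/matrixP => a l; rewrite mxE.
  transitivity (\sum_(k < #|S|) X a (enum_val k) * Z0 (enum_val k) l).
    by apply: eq_bigr => k _; rewrite !mxE.
  rewrite (sum_enum_setC1 j (fun i => X a i * Z0 i l)) Z0j mulr0 subr0.
  by rewrite -[in RHS]XZ0 mxE.
have evj : forall k : 'I_#|S|, enum_val k != j.
  by move=> k; have := enum_valP k; rewrite in_setC1.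
have F4 : (Zs *m XS)^T = Zs *m XS.
  have e : forall a b, (Zs *m XS) a b = (Z0 *m X) (enum_val a) (enum_val b).
    by move=> a b; rewrite !mxE; apply: eq_bigr => k _; rewrite !mxE.
  apply/matrixP => a b; rewrite mxE !e !Z0X !Qjj ?evj //.
  rewrite [P (enum_val b) (enum_val a)]Psym [P (enum_val b) j]Psym.
  by rewrite [P j (enum_val a)]Psym [P j (enum_val b) * _]mulrC.
have nm1 : (n <= m.-1)%N by case: (m) hnm.
have rXS : \rank XS = n.
  apply/eqP; rewrite eqn_leq rank_leq_row /=.
  by have := mxrankM_maxl XS Zs; rewrite F3 mxrank1.
split => //; first by rewrite rXS cS (minn_idPl nm1).
move=> YS Y [hS1 _ _ hS4] [hX1 _ _ hX4].
have rfS : row_free XS by rewrite /row_free rXS.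
have -> : YS = Zs := pinv_uniq (rowfree_rinv rfS hS1) F3 hS4 F4.
have -> : Y = Y0 := pinv_uniq (rowfree_rinv rf hX1) XY0 hX4 sY0.
have -> : frob2 Zs = frob2 Z0.
  rewrite /frob2.
  transitivity (\sum_(k < #|S|) \sum_l Z0 (enum_val k) l ^+ 2).
    by apply: eq_bigr => k _; apply: eq_bigr => l _; rewrite !mxE.
  rewrite (sum_enum_setC1 j (fun i => \sum_l Z0 i l ^+ 2)) [W in _ - W]big1 ?subr0 // => l _.
  by rewrite Z0j expr0n.
rewrite FZ0 -/T.
have hc : c * G j j <= c0 by rewrite /c mulrC ler_pdivrMr.
have -> : (m - n + 1)%:R / (m - n)%:R * T = T + c0.
  by rewrite /c0 natrD; field; rewrite gt_eqF.
by rewrite lerD2l.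
Qed.
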